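(* The language ${\rm ss}(\{0,1\}^* )=\bigcup_{x\in\{0,1\}^*}(x \,\text{ш}\, x)$ is not context-free. In particular, there is a regular language $L$ such that ${\rm ss}(L)$ is not context-free.
   Context: For words $x,y$, the (ordinary) shuffle $x \,\text{ш}\, y$ is the finite set of all words $z = x_1y_1x_2y_2\cdots x_ny_n$ for some $n\ge 1$ and words $x_1,\dots,x_n,y_1,\dots,y_n$ (possibly empty) with $x=x_1\cdots x_n$ and $y=y_1\cdots y_n$. For a language $L$, ${\rm ss}(L)=\bigcup_{x\in L}(x\,\text{ш}\,x)$. *)

(* Defs.v *)
(* Words over the binary alphabet {0,1} are [seq bool]
   (false = 0, true = 1). *)
From HB Require Import structures.
From mathcomp Require Import all_boot.
From Stdlib Require Import Relation_Operators.
From Stdlib Require List.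

Set Implicit Arguments.
Unset Strict Implicit.
Unset Printing Implicit Defensive.

Definition language (T : Type) := seq T -> Prop.

(* Ordinary shuffle, exactly as in the paper: z is in x ш y iff
   z = x_1 y_1 x_2 y_2 ... x_n y_n for some n >= 1 and words x_i, y_i
   (possibly empty) with x = x_1...x_n and y = y_1...y_n.
   The list [ps] is the list of pairs (x_i, y_i). *)
Definition shuffle (T : Type) (x y z : seq T) : Prop :=
  exists ps : seq (seq T * seq T),
    [/\ 1 <= size ps,
        x = flatten (map fst ps),
        y = flatten (map snd ps) &
        z = flatten (map (fun p => p.1 ++ p.2) ps)].

Definition ss (T : Type) (L : language T) : language T :=
  fun z => exists x, L x /\ shuffle x x z.

Definition all_words (T : Type) : language T := fun _ => True.

Record cfg (T : Type) := CFG {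
  cfg_nt : finType;
  cfg_start : cfg_nt;
  cfg_rules : seq (cfg_nt * seq (cfg_nt + T))
}.

Definition cfg_step (T : Type) (g : cfg T)
    (u v : seq (cfg_nt g + T)) : Prop :=
  exists l r A rhs,
    [/\ List.In (A, rhs) (cfg_rules g),
        u = l ++ inl A :: r &
        v = l ++ rhs ++ r].

Definition cfg_derives (T : Type) (g : cfg T) :=
  clos_refl_trans (seq (cfg_nt g + T)) (@cfg_step T g).

Definition cfg_lang (T : Type) (g : cfg T) : language T :=
  fun w => @cfg_derives T g [:: inl (cfg_start g)] (map inr w).

Definition context_free (T : Type) (L : language T) : Prop :=
  exists g : cfg T, forall w, L w <-> cfg_lang g w.

Record dfa (T : Type) := DFA {
  dfa_state : finType;
  dfa_init : dfa_state;
  dfa_accept : pred dfa_state;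
  dfa_trans : dfa_state -> T -> dfa_state
}.

Definition dfa_lang (T : Type) (A : dfa T) : language T :=
  fun w => @dfa_accept T A (foldl (@dfa_trans T A) (@dfa_init T A) w).

Definition regular (T : Type) (L : language T) : Prop :=
  exists A : dfa T, forall w, L w <-> dfa_lang A w.

(* Main.v *)
Require Import Defs.
From mathcomp Require Import all_boot.
From Stdlib Require Import Relation_Operators Operators_Properties.
From Stdlib Require List.
From mathcomp Require Import zify.
Set Implicit Arguments.
Unset Strict Implicit.
Unset Printing Implicit Defensive.

Section Forest.
Variable g : cfg bool.
Local Notation N := (cfg_nt g).
Local Notation sym := ((N + bool)%type).
Local Notation derives := (@cfg_derives bool g).
Local Notation mi := (map (@inr N bool)).

Inductive forest := FNil | FT of bool & forest | FN of N & forest & forest.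

Fixpoint roots f : seq sym := match f with
  FNil => [::] | FT a r => inr a :: roots r | FN A _ r => inl A :: roots r end.
Fixpoint yield f : seq bool := match f with
  FNil => [::] | FT a r => a :: yield r | FN _ s r => yield s ++ yield r end.
Fixpoint valid f : Prop := match f with
  FNil => True | FT _ r => valid r
| FN A s r => List.In (A, roots s) (cfg_rules g) /\ valid s /\ valid r end.
Fixpoint fcat f1 f2 := match f1 with
  FNil => f2 | FT a r => FT a (fcat r f2) | FN A s r => FN A s (fcat r f2) end.

Lemma roots_fcat f1 f2 : roots (fcat f1 f2) = roots f1 ++ roots f2.
Proof. by elim: f1 => //= [a r -> | A s _ r ->]. Qed.
Lemma yield_fcat f1 f2 : yield (fcat f1 f2) = yield f1 ++ yield f2.
Proof. by elim: f1 => //= [a r -> | A s _ r ->]; rewrite ?catA. Qed.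
Lemma valid_fcat f1 f2 : valid f1 -> valid f2 -> valid (fcat f1 f2).
Proof.
elim: f1 => [|a r IH|A s _ r IH] //=.
by move=> [? [? ?]] H2; split; [|split]; auto.
Qed.

Lemma fsplit l r f : roots f = l ++ r -> valid f ->
  exists f1 f2, [/\ roots f1 = l, roots f2 = r, valid f1, valid f2 &
                 yield f = yield f1 ++ yield f2].
Proof.
elim: l f => [|x l IH] f /=.
  by move=> Hr Hv; exists FNil, f.
case: f => //= [a f' | A s f'] [Hx Hr] Hv.
  have [f1 [f2 [H1 H2 H3 H4 H5]]] := IH _ Hr Hv.
  by exists (FT a f1), f2; split => //=; rewrite ?H1 ?Hx ?H5.
case: Hv => Hin [Hs Hv].
have [f1 [f2 [H1 H2 H3 H4 H5]]] := IH _ Hr Hv.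
by exists (FN A s f1), f2; split => //=; rewrite ?H1 ?Hx ?H5 ?catA.
Qed.

Lemma derives_refl u : derives u u.
Proof. exact: rt_refl. Qed.
Lemma derives_trans u v w : derives u v -> derives v w -> derives u w.
Proof. exact: rt_trans. Qed.

Lemma derives_ctx p q u v : derives u v -> derives (p ++ u ++ q) (p ++ v ++ q).
Proof.
elim=> [x y [l [r [A [rhs [Hin -> ->]]]]]| x | x y z _ H1 _ H2].
- apply: rt_step; exists (p ++ l), (r ++ q), A, rhs; split => //.
  + by rewrite -!catA.
  + by rewrite -!catA.
- exact: rt_refl.
- exact: rt_trans H1 H2.
Qed.

Lemma derives_cat u u' v v' : derives u u' -> derives v v' -> derives (u ++ v) (u' ++ v').
Proof.
move=> H1 H2; apply: (@derives_trans _ (u' ++ v)).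
  by have := derives_ctx [::] v H1; rewrite /=.
by have := derives_ctx u' [::] H2; rewrite !cats0.
Qed.

Lemma derives_rule A rhs r : List.In (A, rhs) (cfg_rules g) -> derives (inl A :: r) (rhs ++ r).
Proof. by move=> Hin; apply: rt_step; exists [::], r, A, rhs. Qed.

Lemma forest_derives f : valid f -> derives (roots f) (mi (yield f)).
Proof.
elim: f => /= [_|a r IH Hv|A s IHs r IHr [Hin [Hs Hr]]]; first exact: derives_refl.
  exact: (derives_cat (derives_refl [:: inr a]) (IH Hv)).
apply: derives_trans (derives_rule _ Hin) _.
by rewrite map_cat; apply: derives_cat; auto.
Qed.

Fixpoint leaves (w : seq bool) := if w is a :: w' then FT a (leaves w') else FNil.

Lemma derives_forest u w : derives u (mi w) ->
  exists f, [/\ valid f, roots f = u & yield f = w].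
Proof.
move=> H0; have {H0} := @clos_rt_rt1n _ _ _ _ H0.
move Ev: (mi w) => v H.
elim: H Ev => [x <- | x y z Hxy _ IH Ev].
  exists (leaves w); split; first by elim: w.
    by elim: w => //= a w ->.
  by elim: w => //= a w ->.
have [f [Hv Hr Hy]] := IH Ev.
case: Hxy => [l [r [A [rhs [Hin Ex Ey]]]]].
rewrite Ey in Hr.
have [f1 [f23 [H1 H23 Hv1 Hv23 Hy1]]] := fsplit Hr Hv.
have [f2 [f3 [H2 H3 Hv2 Hv3 Hy2]]] := fsplit H23 Hv23.
exists (fcat f1 (FN A f2 f3)); split.
- by apply: valid_fcat => //=; rewrite H2.
- by rewrite roots_fcat /= H1 H3 Ex.
- by rewrite yield_fcat /= -Hy Hy1 Hy2.
Qed.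

Lemma catne1 (s1 s2 : seq bool) : s1 != [::] -> s1 ++ s2 != [::].
Proof. by case: s1. Qed.
Lemma catne2 (s1 s2 : seq bool) : s2 != [::] -> s1 ++ s2 != [::].
Proof. by case: s1. Qed.

Definition maxr := foldr (fun r acc => maxn (size r.2) acc) 0 (cfg_rules g).
Definition m := maxr.+2.

Lemma rule_size A rhs : List.In (A, rhs) (cfg_rules g) -> size rhs < m.
Proof.
rewrite /m /maxr; elim: (cfg_rules g) => //= [[B r] l IH] [[_ ->]|H].
  move=> /=; lia.
have := IH H; lia.
Qed.

Fixpoint ne f : nat := match f with
  FNil => 0 | FT _ r => (ne r).+1 | FN _ s r => (yield s != [::]) + ne r end.

Lemma ne_le f : ne f <= size (roots f).
Proof. elim: f => [|a r IH|A s _ r IH] /=; [done|done|]; case: (yield s != [::]) => /=; lia. Qed.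

Lemma ne_yield f : 0 < ne f -> yield f != [::].
Proof.
elim: f => //= A s _ r IH.
case: (boolP (yield s == [::])) => [/eqP -> /= /IH //|H _]; exact: catne1.
Qed.

Variable S : finType.
Variable d : S -> bool -> S.
Local Notation run := (foldl d).
Definition Nl := #|{: N * S * S}|.

Fixpoint labels q f : {set (N * S * S)} := match f with
  | FNil => set0
  | FT a r => labels (d q a) r
  | FN A s r => (if 1 < ne s then [set (A, q, run q (yield s))] else set0)
                :|: labels q s :|: labels (run q (yield s)) r end.

Fixpoint good q f : bool := match f with
  | FNil => true
  | FT a r => good (d q a) r
  | FN A s r => [&& good q s, good (run q (yield s)) r &
        (1 < ne s) ==> ((A, q, run q (yield s)) \notin labels q s)] end.

Lemma m_gt0 k : 0 < m ^ k.
Proof. by rewrite expn_gt0. Qed.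

Lemma bound q f : valid f -> good q f -> size (yield f) <= ne f * m ^ #|labels q f|.
Proof.
elim: f q => [|a r IH|A s IHs r IHr] q //=.
  move=> Hv Hg; have := IH _ Hv Hg; rewrite mulSn; have := m_gt0 #|labels (d q a) r|.
  move: (m ^ _) => X; lia.
move=> [Hin [Hs Hr]] /and3P [gs gr gc].
set q' := run q (yield s).
set L := (_ :|: _ :|: _).
have cLs : #|labels q s| <= #|L|.
  by apply: subset_leq_card; rewrite /L -setUA setUCA subsetUl.
have cLr : #|labels q' r| <= #|L|.
  by apply: subset_leq_card; rewrite /L subsetUr.
have Hr' : size (yield r) <= ne r * m ^ #|L|.
  apply: (leq_trans (IHr q' Hr gr)); rewrite leq_mul2l leq_pexp2l ?orbT //.
have Hs' : size (yield s) <= (yield s != [::]) * m ^ #|L|.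
  case: (boolP (yield s == [::])) => [/eqP -> //|_].
  rewrite mul1n.
  case: (ltnP 1 (ne s)) => Hne.
  - move: gc; rewrite Hne /= => gc.
    have c1 : #|labels q s|.+1 <= #|L|.
      apply: (@leq_trans #|(A, q, q') |: labels q s|); first by rewrite cardsU1 gc.
      by apply: subset_leq_card; rewrite /L Hne subsetUl.
    apply: (leq_trans (IHs q Hs gs)).
    apply: (@leq_trans (m * m ^ #|labels q s|)).
      apply: leq_mul => //; have := ne_le s; have := rule_size Hin; lia.
    by rewrite -expnS leq_pexp2l.
  - apply: (leq_trans (IHs q Hs gs)).
    apply: (@leq_trans (1 * m ^ #|labels q s|)); first by rewrite leq_mul2r Hne orbT.
    by rewrite mul1n leq_pexp2l.
rewrite size_cat mulnDl; exact: leq_add.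
Qed.

Lemma occ q f B q1 q2 : valid f -> (B, q1, q2) \in labels q f ->
  exists x v z, [/\ yield f = x ++ v ++ z,
     derives (roots f) (mi x ++ inl B :: mi z), derives [:: inl B] (mi v),
     run q x = q1 /\ run q1 v = q2 & (1 < ne f -> x ++ z != [::])].
Proof.
elim: f q => [|a r IH|A s IHs r IHr] q /=; first by rewrite inE.
  move=> Hv Hin; have [x [v [z [Hy Hd Hd2 [Hq1 Hq2] Hne]]]] := IH _ Hv Hin.
  exists (a :: x), v, z; split => //=; first by rewrite Hy.
  exact: (derives_cat (derives_refl [:: inr a]) Hd).
move=> [Hin [Hs Hr]]; rewrite !in_setU => /orP [/orP [H|H]|H].
- case: ifP H => Hne; rewrite ?inE // => /eqP [-> -> ->].
  exists [::], (yield s), (yield r); split => //.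
  + exact: (derives_cat (derives_refl [:: inl A]) (forest_derives Hr)).
  + apply: derives_trans (derives_rule [::] Hin) _; rewrite cats0; exact: forest_derives.
  + move=> H1 /=; apply: ne_yield; move: H1; case: (yield s != [::]) => /=; lia.
- have [x [v [z [Hy Hd Hd2 [Hq1 Hq2] Hne]]]] := IHs _ Hs H.
  exists x, v, (z ++ yield r); split => //.
  + by rewrite Hy -!catA.
  + apply: derives_trans (derives_rule _ Hin) _.
    have := derives_cat Hd (forest_derives Hr).
    by rewrite map_cat -!catA.
  + move=> H1; rewrite catA; apply: catne2; apply: ne_yield.
    move: H1; case: (yield s != [::]) => /=; lia.
- have [x [v [z [Hy Hd Hd2 [Hq1 Hq2] Hne]]]] := IHr _ Hr H.
  exists (yield s ++ x), v, z; split => //.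
  + by rewrite Hy -!catA.
  + apply: derives_trans (derives_rule _ Hin) _.
    have := derives_cat (forest_derives Hs) Hd.
    by rewrite map_cat -!catA.
  + by rewrite foldl_cat.
  + case: (boolP (yield s == [::])) => [/eqP E|E] H1.
      by rewrite E /=; apply: Hne; exact: H1.
    by rewrite -catA; apply: catne1.
Qed.

Lemma extract q f : valid f -> ~~ good q f ->
  exists A x u v y z, [/\ yield f = x ++ u ++ v ++ y ++ z,
     derives (roots f) (mi x ++ inl A :: mi z),
     derives [:: inl A] (mi u ++ inl A :: mi y),
     derives [:: inl A] (mi v) &
     [/\ u ++ y != [::], size (u ++ v ++ y) <= m ^ Nl.+1,
         run (run q x) u = run q x &
         run (run q (x ++ u ++ v)) y = run q (x ++ u ++ v)]].
Proof.
elim: f q => [|a r IH|A s IHs r IHr] q //=.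
  move=> Hv Hg; have [B [x [u [v [y [z [Hy Hd Hd1 Hd2 [H1 H2 H3 H4]]]]]]]] := IH _ Hv Hg.
  exists B, (a :: x), u, v, y, z; split => //=; first by rewrite Hy.
  exact: (derives_cat (derives_refl [:: inr a]) Hd).
move=> [Hin [Hs Hr]].
set q' := run q (yield s).
case: (boolP (good q s)) => gs; last first.
  have [B [x [u [v [y [z [Hy Hd Hd1 Hd2 [H1 H2 H3 H4]]]]]]]] := IHs _ Hs gs.
  exists B, x, u, v, y, (z ++ yield r); split => //.
  + by rewrite Hy -!catA.
  + apply: derives_trans (derives_rule _ Hin) _.
    have := derives_cat Hd (forest_derives Hr).
    by rewrite map_cat -!catA.
case: (boolP (good q' r)) => gr; last first.
  have [B [x [u [v [y [z [Hy Hd Hd1 Hd2 [H1 H2 H3 H4]]]]]]]] := IHr _ Hr gr.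
  exists B, (yield s ++ x), u, v, y, z; split => //.
  + by rewrite Hy -!catA.
  + apply: derives_trans (derives_rule _ Hin) _.
    have := derives_cat (forest_derives Hs) Hd.
    by rewrite map_cat -!catA.
  + have E t : run q (yield s ++ t) = run q' t by rewrite foldl_cat.
    by split => //; rewrite -?catA !E.
rewrite /= negb_imply negbK => /andP [Hne Hl].
have [x [v [z [Hy Hd Hd2 [Hq1 Hq2] Hnz]]]] := occ Hs Hl.
exists A, [::], x, v, z, (yield r); split => //.
- by rewrite Hy -!catA.
- exact: (derives_cat (derives_refl [:: inl A]) (forest_derives Hr)).
- by apply: derives_trans (derives_rule [::] Hin) _; rewrite cats0.
- split => //.
  + exact: Hnz.
  + rewrite -Hy; apply: (leq_trans (bound Hs gs)).
    apply: (@leq_trans (m * m ^ Nl)); last by rewrite expnS.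
    apply: leq_mul; first by have := ne_le s; have := rule_size Hin; lia.
    by rewrite leq_pexp2l // max_card.
  + rewrite /= foldl_cat Hq1 Hq2.
    have : run q (yield s) = run (run q (x ++ v)) z by rewrite Hy catA foldl_cat.
    by rewrite foldl_cat Hq1 Hq2 => <-.
Qed.

Definition rep i (u : seq bool) := flatten (nseq i u).

Lemma rep_r i (y : seq bool) : rep i.+1 y = rep i y ++ y.
Proof.
have repS j (t : seq bool) : rep j.+1 t = t ++ rep j t by [].
elim: i => [|i IH]; first by rewrite /rep /= cats0.
by rewrite [LHS]repS [in LHS]IH catA -repS.
Qed.

Lemma iter_derives A u y i : derives [:: inl A] (mi u ++ inl A :: mi y) ->
  derives [:: inl A] (mi (rep i u) ++ inl A :: mi (rep i y)).
Proof.
move=> H; elim: i => [|i IH]; first exact: derives_refl.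
apply: derives_trans H _.
have := derives_ctx (mi u) (mi y) IH.
by rewrite (rep_r i y) (_ : rep i.+1 u = u ++ rep i u) // !map_cat -!catA /=.
Qed.

Lemma pumping q0 w : cfg_lang g w -> m ^ Nl.+1 <= size w ->
  exists x u v y z, [/\ w = x ++ u ++ v ++ y ++ z, u ++ y != [::],
     size (u ++ v ++ y) <= m ^ Nl.+1,
     run (run q0 x) u = run q0 x /\
     run (run q0 (x ++ u ++ v)) y = run q0 (x ++ u ++ v) &
     forall i, cfg_lang g (x ++ rep i u ++ v ++ rep i y ++ z)].
Proof.
move=> Hw Hs.
have [f [Hv Hr Hy]] := derives_forest Hw.
case: (boolP (good q0 f)) => Hg.
  have := bound Hv Hg; rewrite Hy.
  have : ne f <= 1 by rewrite (leq_trans (ne_le _)) // Hr.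
  have : #|labels q0 f| <= Nl by exact: max_card.
  move=> c1 c2 c3.
  have : m ^ #|labels q0 f| < m ^ Nl.+1 by rewrite ltn_exp2l // ltnS.
  have := m_gt0 #|labels q0 f|.
  move: c2 c3 Hs; case: (ne f) => [|[|//]] _ /=; lia.
have [A [x [u [v [y [z [Hy' Hd Hd1 Hd2 [H1 H2 H3 H4]]]]]]]] := extract Hv Hg.
exists x, u, v, y, z; split => //; first by rewrite -Hy.
move=> i; rewrite /cfg_lang.
rewrite Hr in Hd.
apply: derives_trans Hd _.
have H := iter_derives i Hd1.
have H' := derives_ctx [::] (mi (rep i y)) (derives_ctx (mi (rep i u)) [::] Hd2).
rewrite /= cats0 -!catA /= in H'.
have := derives_ctx (mi x) (mi z) (derives_trans H H').
by rewrite !map_cat /= -!catA.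
Qed.

End Forest.

Definition W a b c d : seq bool :=
  nseq a false ++ nseq b true ++ nseq c false ++ nseq d true.

Lemma shuffle_mask (x y z : seq bool) : shuffle x y z ->
  exists m, [/\ size m = size z, mask m z = x & mask (map negb m) z = y].
Proof.
move=> [ps [_ -> -> ->]].
elim: ps => [|[p1 p2] ps [m [Hs H1 H2]]] /=; first by exists [::].
exists (nseq (size p1) true ++ nseq (size p2) false ++ m); split.
- rewrite !size_cat !size_nseq Hs; lia.
- rewrite -catA !mask_cat ?size_nseq // mask_true // mask_false H1 //.
- rewrite !map_cat !map_nseq /= -catA !mask_cat ?size_nseq ?size_map //.
  by rewrite mask_true // mask_false H2.
Qed.

Lemma count_mask (p : pred bool) m s : size m = size s ->
  count p (mask m s) + count p (mask (map negb m) s) = count p s.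
Proof.
elim: m s => [|b m IH] [|x s] //= [Hs]; have := IH _ Hs.
by case: b => /=; lia.
Qed.

Lemma ss_shuffle z : ss (@all_words bool) z -> exists x, shuffle x x z.
Proof. by move=> [x [_ H]]; exists x. Qed.

Lemma ss_count (b : bool) z : ss (@all_words bool) z -> (count_mem b z) %% 2 = 0.
Proof.
move=> /ss_shuffle [x /shuffle_mask [m [Hs H1 H2]]].
have := count_mask (pred1 b) Hs; rewrite H1 H2 => <-; lia.
Qed.

Lemma count_negb t : count id (map negb t) + count id t = size t.
Proof. by elim: t => //= b t; case: b => /=; lia. Qed.

Lemma mask_nseq0 (m : bitseq) (a : bool) : mask m (nseq (size m) a) = nseq (count id m) a.
Proof. by elim: m => //= b m IH; case: b => /=; rewrite IH. Qed.
Lemma mask_nseq (m : bitseq) n (a : bool) : size m = n -> mask m (nseq n a) = nseq (count id m) a.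
Proof. by move=> <-; exact: mask_nseq0. Qed.

Lemma mask_nseq_cat m n (a : bool) s : size m = n + size s -> exists k, [/\ k <= n,
  mask m (nseq n a ++ s) = nseq k a ++ mask (drop n m) s &
  mask (map negb m) (nseq n a ++ s) = nseq (n - k) a ++ mask (map negb (drop n m)) s].
Proof.
move=> Hs; have Hn : n <= size m by rewrite Hs leq_addr.
have Ht : size (take n m) = n by rewrite size_takel.
exists (count id (take n m)); split.
- by rewrite -{2}Ht count_size.
- by rewrite -{1}(cat_take_drop n m) mask_cat ?size_nseq // (mask_nseq _ Ht).
- rewrite -{1}(cat_take_drop n m) map_cat mask_cat ?size_nseq ?size_map //.
  rewrite (@mask_nseq (map negb (take n m)) n) ?size_map //.
  have := count_negb (take n m); rewrite Ht => H; congr (nseq _ _ ++ _); lia.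
Qed.

Lemma ss_W a b c d : ss (@all_words bool) (W a b c d) ->
  exists a1 b1 c1 d1, [/\ a1 <= a, b1 <= b, c1 <= c, d1 <= d &
     W a1 b1 c1 d1 = W (a - a1) (b - b1) (c - c1) (d - d1)].
Proof.
move=> /ss_shuffle [x /shuffle_mask [m [Hs H1 H2]]].
move: Hs H1 H2; rewrite /W -(cats0 (nseq d true)) => Hs.
have Sa : size m = a + size (nseq b true ++ nseq c false ++ nseq d true ++ [::]).
  by rewrite Hs !size_cat !size_nseq.
have [a1 [Ha Ea Fa]] := mask_nseq_cat false Sa.
rewrite Ea Fa.
have Sb : size (drop a m) = b + size (nseq c false ++ nseq d true ++ [::]).
  by rewrite size_drop Sa !size_cat !size_nseq; lia.
have [b1 [Hb Eb Fb]] := mask_nseq_cat true Sb.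
rewrite Eb Fb.
have Sc : size (drop b (drop a m)) = c + size (nseq d true ++ [::]).
  by rewrite size_drop Sb !size_cat !size_nseq; lia.
have [c1 [Hc Ec Fc]] := mask_nseq_cat false Sc.
rewrite Ec Fc.
have Sd : size (drop c (drop b (drop a m))) = d + size ([::] : seq bool).
  by rewrite size_drop Sc !size_cat !size_nseq; lia.
have [d1 [Hd Ed Fd]] := mask_nseq_cat true Sd.
rewrite Ed Fd !mask0 !cats0 => E1 E2.
by exists a1, b1, c1, d1; split => //; rewrite /W E1 E2.
Qed.

Lemma index_nseqF k s : index true (nseq k false ++ s) = k + index true s.
Proof. by elim: k => //= k ->. Qed.

Lemma index_W a b c d : index true (W a b c d) = a + (if b == 0 then c else 0).
Proof.
rewrite /W index_nseqF; case: b => [|b] /=; last by rewrite addn0.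
by rewrite index_nseqF; case: d => //=; rewrite !addn0.
Qed.

Lemma countF_W a b c d : count_mem false (W a b c d) = a + c.
Proof. by rewrite /W !count_cat !count_nseq /=; lia. Qed.

Lemma countT_W a b c d : count_mem true (W a b c d) = b + d.
Proof. by rewrite /W !count_cat !count_nseq /=; lia. Qed.

Lemma BL0 a1 b1 c1 d1 a2 b2 c2 d2 : W a1 b1 c1 d1 = W a2 b2 c2 d2 ->
  a1 < a2 -> 0 < b1 + b2 -> a1 + a2 < c1 + c2 -> False.
Proof.
move=> E H1 H2 H3.
have Ez := congr1 (count_mem false) E; rewrite !countF_W in Ez.
have := congr1 (index true) E; rewrite !index_W.
case: b1 E H2 => [|b1] E H2; case: b2 E H2 => [|b2] E //= H2; lia.
Qed.

Lemma BL a1 b1 c1 d1 a2 b2 c2 d2 : W a1 b1 c1 d1 = W a2 b2 c2 d2 ->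
  (a1 + a2) %% 2 = 1 -> 0 < b1 + b2 -> a1 + a2 < c1 + c2 -> False.
Proof.
move=> E H1 H2 H3.
case: (ltngtP a1 a2) => H.
- exact: BL0 E H H2 H3.
- by apply: (BL0 (esym E)) => //; lia.
- move: H1; rewrite H; lia.
Qed.

Lemma rev_W a b c d : rev (map negb (W a b c d)) = W d c b a.
Proof. by rewrite /W !map_cat !map_nseq /= !rev_cat !rev_nseq -!catA. Qed.

Lemma notss1 a b c d : ss (@all_words bool) (W a b c d) ->
  a %% 2 = 1 -> 0 < b -> a < c -> False.
Proof.
move=> /ss_W [a1 [b1 [c1 [d1 [Ha Hb Hc Hd E]]]]] H1 H2 H3.
apply: (BL E); lia.
Qed.

Lemma notss2 a b c d : ss (@all_words bool) (W a b c d) ->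
  d %% 2 = 1 -> 0 < c -> d < b -> False.
Proof.
move=> /ss_W [a1 [b1 [c1 [d1 [Ha Hb Hc Hd E]]]]] H1 H2 H3.
have := congr1 (fun s => rev (map negb s)) E; rewrite /= !rev_W => E'.
apply: (BL E'); lia.
Qed.

Lemma parity_W a b c d : ss (@all_words bool) (W a b c d) ->
  (a + c) %% 2 = 0 /\ (b + d) %% 2 = 0.
Proof.
move=> H; split.
  by have := ss_count false H; rewrite countF_W.
by have := ss_count true H; rewrite countT_W.
Qed.

Lemma WW n : ss (@all_words bool) (W n n n n).
Proof.
exists (nseq n false ++ nseq n true); split => //.
exists [:: (nseq n false ++ nseq n true, nseq n false ++ nseq n true)]; split => //=.
- by rewrite cats0.
- by rewrite cats0.
- by rewrite cats0 /W -!catA.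
Qed.

Definition Bf (K : nat -> nat) qa qb U Y j i :=
  K j + (if j == qa then i * U else 0) + (if j == qb then i * Y else 0).

Lemma final n U Y qa qb K : n %% 2 = 1 -> 0 < U + Y -> 1 <= qa -> qa <= qb -> qb <= 4 ->
  qb <= qa.+1 ->
  (forall j, 1 <= j <= 4 -> n = Bf K qa qb U Y j 1) ->
  ss (@all_words bool) (W (Bf K qa qb U Y 1 0) (Bf K qa qb U Y 2 0) (Bf K qa qb U Y 3 0) (Bf K qa qb U Y 4 0)) ->
  ss (@all_words bool) (W (Bf K qa qb U Y 1 2) (Bf K qa qb U Y 2 2) (Bf K qa qb U Y 3 2) (Bf K qa qb U Y 4 2)) ->
  False.
Proof.
move=> Hn HUY H1 H2 H3 H4 HK H0 H2'.
have E1 := HK 1 isT; have E2 := HK 2 isT; have E3 := HK 3 isT; have E4 := HK 4 isT.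
have [P1 P2] := parity_W H2'; clear HK.
move: E1 E2 E3 E4 P1 P2 H0 H2'; rewrite /Bf.
case: qa H1 H2 H4 => [|[|[|[|[|qa]]]]] //= _; case: qb H3 => [|[|[|[|[|qb]]]]] //= _ _ _;
  rewrite ?mul0n ?mul1n ?addn0 => E1 E2 E3 E4 P1 P2 H0 H2;
  case: (posnP U) => HU;
  first [ apply: (notss1 H0); lia | apply: (notss1 H2); lia
        | apply: (notss2 H0); lia | apply: (notss2 H2); lia ].
Qed.

Definition stepn (k : nat) (b : bool) : nat :=
  match k, b with
  | 1, false => 1 | 1, true => 2 | 2, true => 2 | 2, false => 3
  | 3, false => 3 | 3, true => 4 | 4, true => 4 | _, _ => 5 end.
Definition runn := foldl stepn.
Definition dst (q : 'I_6) (b : bool) : 'I_6 := inord (stepn q b).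

Lemma stepn_le5 k b : stepn k b <= 5.
Proof. by case: k => [|[|[|[|[|k]]]]]; case: b. Qed.

Lemma run_val (q : 'I_6) w : nat_of_ord (foldl dst q w) = runn q w.
Proof.
elim: w q => //= a w IH q; rewrite IH /dst inordK // ltnS; exact: stepn_le5.
Qed.

Lemma step_mono k b : k <= 5 -> k <= stepn k b.
Proof. by case: k => [|[|[|[|[|[|k]]]]]] //; case: b. Qed.

Lemma runn_mono k w : k <= 5 -> k <= runn k w /\ runn k w <= 5.
Proof.
elim: w k => /= [|a w IH] k Hk; first by split.
have := step_mono a Hk; have := stepn_le5 k a; have [H1 H2] := IH (stepn k a) (stepn_le5 _ _).
lia.
Qed.

Lemma runn5 w : runn 5 w = 5.
Proof. by elim: w => //= a w; case: a. Qed.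

Lemma runn_cat k s1 s2 : runn k (s1 ++ s2) = runn (runn k s1) s2.
Proof. exact: foldl_cat. Qed.

Fixpoint bc j k (w : seq bool) : nat :=
  if w is a :: w' then (stepn k a == j) + bc j (stepn k a) w' else 0.

Lemma bc_cat j k s1 s2 : bc j k (s1 ++ s2) = bc j k s1 + bc j (runn k s1) s2.
Proof. by elim: s1 k => //= a s IH k; rewrite IH addnA. Qed.

Lemma bc_lt j k w : j < k -> k <= 5 -> bc j k w = 0.
Proof.
elim: w k => //= a w IH k H1 H2.
have := step_mono a H2 => H3.
rewrite IH; [|lia|exact: stepn_le5].
have -> : (stepn k a == j) = false by apply/eqP; lia.
by [].
Qed.

Lemma bc_gt j k w : runn k w < j -> k <= 5 -> bc j k w = 0.
Proof.
elim: w k => //= a w IH k H1 H2.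
have [H3 H4] := runn_mono w (stepn_le5 k a).
rewrite IH //; last exact: stepn_le5.
have -> : (stepn k a == j) = false by apply/eqP; lia.
by [].
Qed.

Lemma bc_loop j k w : runn k w = k -> k <= 5 -> bc j k w = (if j == k then size w else 0).
Proof.
elim: w k => //= [|a w IH] k H1 H2; first by case: (j == k).
have H3 := step_mono a H2.
have [H4 H5] := runn_mono w (stepn_le5 k a).
have E : stepn k a = k by lia.
rewrite E IH; last by [].
  case: (boolP (j == k)) => [/eqP ->|Hne]; first by rewrite eqxx /=; lia.
  by rewrite eq_sym (negbTE Hne).
by rewrite -{2}H1 E.
Qed.

Lemma bc_size j k w : bc j k w <= size w.
Proof. elim: w k => //= a w IH k; have := IH (stepn k a); case: (_ == _) => /=; lia. Qed.

Lemma decode k w : 1 <= k <= 4 -> runn k w <= 4 ->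
  w = W (bc 1 k w) (bc 2 k w) (bc 3 k w) (bc 4 k w).
Proof.
elim: w k => [|a w IH] k Hk Hr; first by [].
move: Hr => /= Hr.
have [H1 H2] := runn_mono w (stepn_le5 k a).
have H3 : k <= stepn k a by apply: step_mono; lia.
have Hk' : 1 <= stepn k a <= 4 by lia.
rewrite {1}(IH _ Hk' Hr).
have H4 : stepn k a <= 4 by lia.
move: H4; case/andP: Hk.
case: k {IH Hr H1 H2 H3 Hk'} => [|[|[|[|[|k]]]]] // _ _; case: a => //= _;
  rewrite ?(@bc_lt 1 2) ?(@bc_lt 1 3) ?(@bc_lt 2 3) ?(@bc_lt 1 4) ?(@bc_lt 2 4) ?(@bc_lt 3 4) //.
Qed.

Lemma runn_nseq k a j : stepn k a = k -> runn k (nseq j a) = k.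
Proof. by move=> H; elim: j => //= j; rewrite H. Qed.

Lemma bc_nseq i k a j : stepn k a = k -> k <= 5 -> bc i k (nseq j a) = (if i == k then j else 0).
Proof. by move=> H H5; rewrite bc_loop ?runn_nseq ?size_nseq. Qed.

Lemma W_facts n : 0 < n -> runn 1 (W n n n n) = 4 /\
  forall j, 1 <= j <= 4 -> bc j 1 (W n n n n) = n.
Proof.
move=> Hn; have [n' E] : exists n', n = n'.+1 by exists n.-1; lia.
rewrite E {Hn E}; rewrite /W.
have R1 : runn 1 (nseq n'.+1 false) = 1 by rewrite runn_nseq.
have R2 : runn 1 (nseq n'.+1 true) = 2 by rewrite /= runn_nseq.
have R3 : runn 2 (nseq n'.+1 false) = 3 by rewrite /= runn_nseq.
have R4 : runn 3 (nseq n'.+1 true) = 4 by rewrite /= runn_nseq.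
split; first by rewrite !runn_cat R1 R2 R3 R4.
move=> j Hj; rewrite !bc_cat R1 R2 R3.
rewrite bc_nseq //.
rewrite [bc j 1 (nseq n'.+1 true)]/= bc_nseq //.
rewrite [bc j 2 (nseq n'.+1 false)]/= bc_nseq //.
rewrite [bc j 3 (nseq n'.+1 true)]/= bc_nseq //.
case/andP: Hj; case: j => [|[|[|[|[|j]]]]] //= _ _; lia.
Qed.

Lemma runn_rep k u i : runn k u = k -> runn k (rep i u) = k.
Proof.
move=> H; elim: i => // i IH.
by rewrite (_ : rep i.+1 u = u ++ rep i u) // runn_cat H IH.
Qed.

Lemma size_rep i (u : seq bool) : size (rep i u) = i * size u.
Proof.
elim: i => // i IH.
by rewrite (_ : rep i.+1 u = u ++ rep i u) // size_cat IH mulSn.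
Qed.

Theorem notcf : ~ context_free (ss (@all_words bool)).
Proof.
move=> [g Hg].
set P := m g ^ (Nl g 'I_6).+1.
set n := (P + P).+1.
have Hw : cfg_lang g (W n n n n) by apply/Hg; exact: WW.
have Hsz : P <= size (W n n n n) by rewrite /W !size_cat !size_nseq; lia.
have [x [u [v [y [z [E Hne Hs [L1 L2] Hp]]]]]] := pumping dst (inord 1) Hw Hsz.
have Hs2 : size (u ++ v ++ y) <= P by exact: Hs.
have val1 : nat_of_ord (inord 1 : 'I_6) = 1 by rewrite inordK.
have L1' : runn (runn 1 x) u = runn 1 x.
  by have := congr1 (@nat_of_ord 6) L1; rewrite !run_val val1.
have L2' : runn (runn 1 (x ++ u ++ v)) y = runn 1 (x ++ u ++ v).
  by have := congr1 (@nat_of_ord 6) L2; rewrite !run_val val1.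
set qa := runn 1 x in L1'.
set qb := runn 1 (x ++ u ++ v) in L2'.
have [R4 Hbc] := W_facts (ltn0Sn (P + P)).
rewrite -/n E in R4 Hbc.
have [Hqa1 Hqa5] := runn_mono x (isT : 1 <= 5).
rewrite -/qa in Hqa1 Hqa5.
have Hv : runn qa v = qb by rewrite /qb runn_cat -/qa runn_cat L1'.
have [Hqab Hqb5] := runn_mono v Hqa5; rewrite Hv in Hqab Hqb5.
have Hz : runn qb z = 4.
  have : runn 1 ((x ++ u ++ v) ++ y ++ z) = 4 by rewrite -!catA.
  by rewrite runn_cat -/qb runn_cat L2'.
have Hqb4 : qb <= 4.
  case: (leqP qb 4) => // H.
  have Eq : qb = 5 by lia.
  by rewrite Eq runn5 in Hz.
pose K j := bc j 1 x + bc j qa v + bc j qb z.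
pose Wi i := x ++ rep i u ++ v ++ rep i y ++ z.
have bcWi i j : bc j 1 (Wi i) = Bf K qa qb (size u) (size y) j i.
  rewrite /Wi !bc_cat -/qa runn_rep // Hv runn_rep //.
  rewrite (bc_loop _ (runn_rep i L1')) // (bc_loop _ (runn_rep i L2')) ?(leq_trans Hqb4) //.
  rewrite !size_rep /Bf /K.
  by case: (j == qa); case: (j == qb) => /=; lia.
have runWi i : runn 1 (Wi i) = 4.
  by rewrite /Wi !runn_cat -/qa (runn_rep i L1') Hv (runn_rep i L2').
have key i : ss (@all_words bool) (W (Bf K qa qb (size u) (size y) 1 i)
   (Bf K qa qb (size u) (size y) 2 i) (Bf K qa qb (size u) (size y) 3 i)
   (Bf K qa qb (size u) (size y) 4 i)).
  rewrite -!bcWi -decode ?runWi //.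
  by apply/Hg; exact: Hp.
have W1 : Wi 1 = x ++ u ++ v ++ y ++ z by rewrite /Wi /rep /= !cats0.
have Hn j : 1 <= j <= 4 -> n = Bf K qa qb (size u) (size y) j 1.
  by move=> Hj; rewrite -bcWi W1 Hbc.
have Hlen : qb <= qa.+1.
  case: (leqP qb qa.+1) => // H.
  have Hj : 1 <= qa.+1 <= 4 by lia.
  have := Hn _ Hj; rewrite /Bf /K.
  have B1 : bc qa.+1 1 x = 0 by apply: bc_gt => //; rewrite -/qa; lia.
  have B2 : bc qa.+1 qb z = 0 by apply: bc_lt; lia.
  rewrite B1 B2.
  rewrite (_ : (qa.+1 == qa) = false); last by apply/eqP; lia.
  rewrite (_ : (qa.+1 == qb) = false); last by apply/eqP; lia.
  have := bc_size qa.+1 qa v; move: Hs2; rewrite !size_cat /n => ? ? ?; exfalso; lia.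
have HUY : 0 < size u + size y.
  by move: Hne; rewrite -size_cat lt0n size_eq0.
have F := @final n (size u) (size y) qa qb K.
by apply: F => //; first [exact: key | rewrite /n; lia].
Qed.

Theorem mainTheorem1 :
  ~ context_free (ss (@all_words bool)) /\
  exists L : language bool, regular L /\ ~ context_free (ss L).
Proof.
split; first exact: notcf.
exists (@all_words bool); split; last exact: notcf.
exists (DFA (tt : unit) (fun _ => true) (fun _ _ => tt)).
by move=> w; split.
Qed.
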